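(* Let $N\ge 2$ and for $0\le k\le\lfloor N/2\rfloor$ let $\mathcal I_k$ be the set of $k$-element subsets $I\subset\mathbb{Z}_N$ such that $i\not\equiv i'+1\pmod N$ for all $i,i'\in I$ (so $|\mathcal I_0|=1$). Then for every $j$ with $1\le j\le\lfloor N/2\rfloor$, $$\sum_{k=0}^{j}(-1)^k\,|\mathcal I_k|\binom{N-2k}{j-k}=0 .$$ *)

(* Defs.v *)
From mathcomp Require Import all_boot all_order all_algebra.
Set Implicit Arguments. Unset Strict Implicit. Unset Printing Implicit Defensive.
Import GRing.Theory Num.Theory.

(* Z_N is modelled by 'I_N (residues 0..N-1); "i = i' + 1 (mod N)" is
   (i : nat) == (i' + 1) %% N. *)
Definition cyc_indep (N k : nat) : {set {set 'I_N}} :=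
  [set I : {set 'I_N} | (#|I| == k) &&
     [forall i in I, forall i' in I, (i : nat) != (i' + 1) %% N]].

(* Main.v *)
Require Import Defs.
From mathcomp Require Import all_boot all_order all_algebra.
From mathcomp Require Import zify.
Import GRing.Theory Num.Theory.
Set Implicit Arguments. Unset Strict Implicit. Unset Printing Implicit Defensive.

Definition indepb N (I : {set 'I_N}) := [forall i in I, ordS i \notin I].
Definition good N j (x : {set 'I_N} * {set 'I_N}) :=
  [&& indepb x.1, [forall i in x.2, (i \notin x.1) && (ord_pred i \notin x.1)]
    & #|x.1| + #|x.2| == j].
Definition ev N (x : {set 'I_N} * {set 'I_N}) (v : 'I_N) :=
  (v \in x.1) || [&& v \in x.2, ordS v \notin x.2 & ordS v \notin x.1].
Definition tog N (x : {set 'I_N} * {set 'I_N}) (v : 'I_N) :=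
  if v \in x.1 then (x.1 :\ v, v |: x.2) else (v |: x.1, x.2 :\ v).

Lemma ordS_neq N (v : 'I_N) : (1 < N)%N -> ordS v != v.
Proof.
move=> hN; apply/eqP => /(congr1 val) /=.
have hv := ltn_ord v.
case: (ltnP v.+1 N) => h.
  by rewrite modn_small // => h0; lia.
have -> : v.+1 = N by lia.
by rewrite modnn => h0; lia.
Qed.

Lemma indepP N (I : {set 'I_N}) i : indepb I -> i \in I -> ordS i \notin I.
Proof. by move/forall_inP; apply. Qed.

Lemma goodP N j (x : {set 'I_N} * {set 'I_N}) : good j x ->
  [/\ indepb x.1, (forall i, i \in x.2 -> i \notin x.1),
      (forall i, i \in x.2 -> ord_pred i \notin x.1) & #|x.1| + #|x.2| = j]%N.
Proof.
case/and3P=> h1 /forall_inP h2 /eqP h3; split=> // i /h2 /andP[]//.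
Qed.

Lemma ev_tog N (x : {set 'I_N} * {set 'I_N}) v j : (1 < N)%N -> good j x -> ev x v ->
  [/\ good j (tog x v), ev (tog x v) =1 ev x, tog (tog x v) v = x &
      (#|x.1| = #|(tog x v).1|.+1 \/ #|(tog x v).1| = #|x.1|.+1)].
Proof.
move=> hN; case: x => I S /goodP /= [hI hS1 hS2 hc].
rewrite /ev /tog /=.
have hSv := ordS_neq v hN.
case: ifP => vI /=.
- move=> _.
  have vS : v \notin S by apply/negP => /hS1; rewrite vI.
  have sI := indepP hI vI.
  have sS : ordS v \notin S by apply/negP => /hS2; rewrite ordSK vI.
  split.
  + apply/and3P; split.
    * apply/forall_inP => i; rewrite !inE => /andP[_ iI].
      by rewrite negb_and (indepP hI iI) orbT.
    * apply/forall_inP => i; rewrite !inE => /orP[/eqP->|iS].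
        rewrite eqxx /=.
        apply/negP => /andP[_ pI]; have := indepP hI pI.
        by rewrite ord_predK vI.
      by rewrite !negb_and (hS1 _ iS) (hS2 _ iS) !orbT.
    * apply/eqP => /=; move: hc; rewrite (cardsD1 v I) vI cardsU1 vS /=; by move=> <-; rewrite addnCA addnA.
  + move=> u /=; rewrite !inE.
    have [->|uv] := eqVneq u v.
      by rewrite vI (negbTE hSv) (negbTE sS) (negbTE sI).
    rewrite /=.
    have [Euv|Euv] := eqVneq (ordS u) v.
      by rewrite Euv vI /= !andbF.
    by [].
  + by rewrite !inE eqxx /= setD1K // setU1K.
  + by left; rewrite (cardsD1 v I) vI.
- case/and3P => vS sS sI.
  split.
  + apply/and3P; split.
    * apply/forall_inP => i; rewrite !inE => /orP[/eqP->|iI].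
        by rewrite negb_or hSv.
      rewrite negb_or (indepP hI iI) andbT.
      apply/negP => /eqP Ei; have := hS2 _ vS.
      by rewrite -Ei ordSK iI.
    * apply/forall_inP => i; rewrite !inE => /andP[iv iS].
      rewrite !negb_or iv (hS1 _ iS) (hS2 _ iS) !andbT /=.
      apply/negP => /eqP Ei; move: sS; rewrite -Ei ord_predK iS.
      by [].
    * apply/eqP => /=; move: hc; rewrite (cardsD1 v S) vS cardsU1 vI /=; by move=> <-; rewrite addnCA addnA.
  + move=> u /=; rewrite !inE.
    have [->|uv] := eqVneq u v.
      by rewrite vI vS sS sI.
    rewrite /=.
    have [Euv|Euv] := eqVneq (ordS u) v.
      by rewrite Euv vI vS /= !andbF.
    by [].
  + by rewrite !inE eqxx /= setU1K ?vI // setD1K.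
  + by right; rewrite cardsU1 vI.
Qed.

Lemma closed_all N (S : {set 'I_N}) v : v \in S ->
  (forall u, u \in S -> ordS u \in S) -> forall u, u \in S.
Proof.
move=> vS cl.
have iterP m : val (iter m (@ordS N) v) = (v + m) %% N.
  elim: m => [|m IH] /=; first by rewrite addn0 modn_small.
  by rewrite IH -addn1 modnDml addn1 addnS.
have memS m : iter m (@ordS N) v \in S.
  by elim: m => [|m IH] //=; apply: cl.
move=> u.
have -> : u = iter (N - v + u) (@ordS N) v.
  apply: val_inj; rewrite iterP.
  have hv := ltn_ord v; have hu := ltn_ord u.
  have -> : v + (N - v + u) = u + N by lia.
  by rewrite modnDr modn_small.
exact: memS.
Qed.

Lemma ev_exists N j (x : {set 'I_N} * {set 'I_N}) :
  (1 <= j)%N -> (j < N)%N -> good j x -> exists v, ev x v.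
Proof.
move=> hj1 hjN /goodP [hI hS1 hS2 hc].
case: (set_0Vmem x.1) => [I0|[v vI]]; last by exists v; rewrite /ev vI.
have hS : (0 < #|x.2|)%N by move: hc; rewrite I0 cards0; lia.
have [v vS] : exists v, v \in x.2.
  by move: hS; rewrite card_gt0 => /set0Pn.
case: (pickP (ev x)) => [u hu|none]; first by exists u.
have cl u : u \in x.2 -> ordS u \in x.2.
  move=> uS; have := none u; rewrite /ev I0 !inE uS /= andbT.
  by move/negbT/negPn.
have all := closed_all vS cl.
have : #|x.2| = N.
  by rewrite -[RHS]card_ord; apply: eq_card => u; rewrite all.
by move: hc; rewrite I0 cards0; lia.
Qed.

Definition g N j (x : {set 'I_N} * {set 'I_N}) :=
  if good j x then (if [pick v | ev x v] is Some v then tog x v else x) else x.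

Local Open Scope ring_scope.

Lemma gP N j (x : {set 'I_N} * {set 'I_N}) : (1 < N)%N -> (1 <= j)%N -> (j < N)%N ->
  good j x -> [/\ good j (g j x), g j (g j x) = x &
     (-1) ^+ #|(g j x).1| = - (-1) ^+ #|x.1| :> int].
Proof.
move=> hN hj1 hjN gx.
rewrite /g gx.
case E : [pick u | ev x u] => [v|]; last first.
  have [v evv] := ev_exists hj1 hjN gx.
  by move: E; case: pickP => // /(_ v); rewrite evv.
have evv : ev x v by move: E; case: pickP => // u hu [<-].
have [gt evt tt hc] := ev_tog hN gx evv.
split=> //.
  by rewrite gt (eq_pick evt) E tt.
case: hc => ->; rewrite exprS ?mulN1r ?opprK //.
Qed.

Lemma gK N j (x : {set 'I_N} * {set 'I_N}) : (1 < N)%N -> (1 <= j)%N -> (j < N)%N ->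
  g j (g j x) = x.
Proof.
move=> hN hj1 hjN; case gx: (good j x); first by case: (gP hN hj1 hjN gx).
by rewrite /g gx gx.
Qed.

Lemma sum_good0 N j : (1 < N)%N -> (1 <= j)%N -> (j < N)%N ->
  \sum_(x : {set 'I_N} * {set 'I_N} | good j x) (-1) ^+ #|x.1| = 0 :> int.
Proof.
move=> hN hj1 hjN.
set s := (X in X = _).
have : s = - s.
  rewrite {1}/s (reindex_inj (can_inj (fun x => gK x hN hj1 hjN))) /=.
  rewrite /s -sumrN; apply: eq_big => x.
    case gx: (good j x); first by case: (gP hN hj1 hjN gx).
    by rewrite /g gx gx.
  move=> ggx; have gx : good j x by move: ggx; rewrite /g; case: ifP => // ->.
  by case: (gP hN hj1 hjN gx).
move=> h; lia.
Qed.

Lemma cyc_indepE N k (I : {set 'I_N}) :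
  (I \in cyc_indep N k) = (#|I| == k) && indepb I.
Proof.
rewrite inE; congr (_ && _).
apply/forall_inP/forall_inP => h i iI.
  apply/negP => sI; have /forall_inP/(_ i iI) := h _ sI.
  by rewrite addn1 eqxx.
apply/forall_inP => i' i'I; apply/negP => /eqP E.
have Eo : ordS i' = i by apply: val_inj; rewrite /= E addn1.
by have := h _ i'I; rewrite Eo iI.
Qed.

Definition Aset N (I : {set 'I_N}) := [set i | (i \notin I) && (ord_pred i \notin I)].

Lemma card_Aset N (I : {set 'I_N}) : indepb I -> #|Aset I| = (N - 2 * #|I|)%N.
Proof.
move=> hI.
have -> : Aset I = ~: (I :|: (@ord_pred N) @^-1: I).
  by apply/setP => i; rewrite !inE negb_or.
rewrite cardsCs setCK card_ord.
have hU := cardsUI I ((@ord_pred N) @^-1: I).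
have E0 : I :&: (@ord_pred N) @^-1: I = set0.
  apply/setP => i; rewrite !inE; apply/negP => /andP[iI pI].
  by have := indepP hI pI; rewrite ord_predK iI.
rewrite E0 cards0 addn0 card_preimset in hU; last exact: can_inj (@ord_predK N).
by rewrite hU; lia.
Qed.

Lemma inner_sum N j (I : {set 'I_N}) :
  \sum_(S : {set 'I_N}) (if good j (I, S) then (-1) ^+ #|I| else 0 : int) =
  if indepb I && (#|I| <= j)%N then
    (-1) ^+ #|I| * ('C(N - 2 * #|I|, j - #|I|))%:R else 0.
Proof.
have E S : good j (I, S) = indepb I && (#|I| <= j)%N &&
    (S \in [set S : {set 'I_N} | (S \subset Aset I) & #|S| == (j - #|I|)%N]).
  rewrite /good /= !inE.
  have -> : [forall i in S, (i \notin I) && (ord_pred i \notin I)] = (S \subset Aset I).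
    apply/forall_inP/subsetP => h i /h; by rewrite inE.
  case: (indepb I) => //=.
  case: (S \subset Aset I); rewrite ?andbF ?andbT //=.
  apply/eqP/idP => [<-|/andP[h /eqP ->]]; first by rewrite leq_addr /= addKn.
  by rewrite subnKC.
under eq_bigr do rewrite E.
case: ifP => h; last by rewrite big1 // => S _; rewrite h.
rewrite -big_mkcond /= (eq_bigl (fun S => S \in [set S : {set 'I_N} | (S \subset Aset I) & #|S| == (j - #|I|)%N])); last first.
  by [].
move/andP: h => [hI _].
by rewrite sumr_const cards_draws card_Aset // mulr_natr.
Qed.

From mathcomp Require Import ring.
Unset Implicit Arguments.

Theorem mainTheorem2 (N j : nat) (hN : (2 <= N)%N) (hj1 : (1 <= j)%N)
  (hj2 : (j <= N./2)%N) :
  \sum_(0 <= k < j.+1) (-1) ^+ k * (#|cyc_indep N k| * 'C(N - 2 * k, j - k))%:R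
    = 0 :> int.
Proof.
have hN1 : (1 < N)%N by [].
have hjN : (j < N)%N.
  apply: (leq_ltn_trans hj2); rewrite -{2}(odd_double_half N).
  have := half_leq hN; rewrite /= => h2; lia.
rewrite -(sum_good0 hN1 hj1 hjN) big_mkord.
transitivity (\sum_(I : {set 'I_N}) \sum_(S : {set 'I_N})
    (if good j (I, S) then (-1) ^+ #|I| else 0 : int)); last first.
  by rewrite pair_big [RHS]big_mkcond; apply: eq_bigr => -[I S] _.
rewrite [in RHS](eq_bigr _ (fun I _ => inner_sum j I)).
transitivity (\sum_(k < j.+1) \sum_(I : {set 'I_N})
   (if I \in cyc_indep N k then
      (-1) ^+ #|I| * ('C(N - 2 * #|I|, j - #|I|))%:R else 0 : int)).
  apply: eq_bigr => k _; rewrite -big_mkcond /=.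
  rewrite (eq_bigr (fun _ => (-1) ^+ k * ('C(N - 2 * k, j - k))%:R : int)); last first.
    by move=> I; rewrite cyc_indepE => /andP[/eqP ->].
  rewrite sumr_const -mulr_natr natrM; ring.
rewrite exchange_big; apply: eq_bigr => I _.
under eq_bigr do rewrite cyc_indepE.
case: (boolP (indepb I)) => hI; last first.
  by rewrite big1 // => k _; rewrite andbF.
rewrite /=; case: (leqP #|I| j) => hk.
  have hk' : (#|I| < j.+1)%N by [].
  rewrite (bigD1 (Ordinal hk')) //= eqxx big1 ?addr0 // => k hk2.
  case: eqP => // E; move: hk2; rewrite -val_eqE /= E eqxx //.
  rewrite big1 // => k _; rewrite andbT; case: eqP => // E; have := ltn_ord k; rewrite ltnS => hk2.
  by move: hk; rewrite E => hk; have := leq_ltn_trans hk2 hk; rewrite ltnn.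
Qed.
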